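(* Let $\mathrm{Sol}$ be $\mathbb{R}^3$ with Riemannian metric $e^{-2z}dx^2+e^{2z}dy^2+dz^2$, let $r>0$, and let $\mathcal{S}_r$ be the metric sphere of radius $r$ centered at the origin. If $p=(x,y,z)\in\mathcal{S}_r$ with $x>0$, then $\eta_X(p)$ lies in the open disk of radius $r$ centered at the origin in the plane $\Pi_X=\{x=0\}$, with respect to the induced metric $e^{2z}dy^2+dz^2$ on $\Pi_X$.
   Context: $\eta_X(x,y,z)=(0,y,z)$. The plane $\Pi_X$ with the induced metric is isometric to the hyperbolic plane. *)

(* Defs.v *)
From Stdlib Require Import Reals.
From Coquelicot Require Import Coquelicot.
Open Scope R_scope.

Definition C1_on01 (f : R -> R) : Prop :=
  forall t, 0 <= t <= 1 -> ex_derive f t /\ continuous (Derive f) t.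

Definition sol_length (gx gy gz : R -> R) : R :=
  RInt (fun t => sqrt (exp (-2 * gz t) * (Derive gx t) ^ 2
                       + exp (2 * gz t) * (Derive gy t) ^ 2
                       + (Derive gz t) ^ 2)) 0 1.

Definition sol_lengths (p q : R * R * R) (L : R) : Prop :=
  exists gx gy gz : R -> R,
    C1_on01 gx /\ C1_on01 gy /\ C1_on01 gz /\
    (gx 0, gy 0, gz 0) = p /\ (gx 1, gy 1, gz 1) = q /\
    L = sol_length gx gy gz.

Definition sol_dist (p q : R * R * R) : Rbar := Glb_Rbar (sol_lengths p q).

Definition sol_sphere (r : R) (p : R * R * R) : Prop :=
  sol_dist (0, 0, 0) p = Finite r.

(* Projection eta_X(x,y,z) = (0,y,z), with the plane Pi_X = {x=0}
   parametrized by (y,z). *)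
Definition etaX (p : R * R * R) : R * R :=
  let '(_, y, z) := p in (y, z).

Definition piX_length (gy gz : R -> R) : R :=
  RInt (fun t => sqrt (exp (2 * gz t) * (Derive gy t) ^ 2
                       + (Derive gz t) ^ 2)) 0 1.

Definition piX_lengths (p q : R * R) (L : R) : Prop :=
  exists gy gz : R -> R,
    C1_on01 gy /\ C1_on01 gz /\
    (gy 0, gz 0) = p /\ (gy 1, gz 1) = q /\
    L = piX_length gy gz.

Definition piX_dist (p q : R * R) : Rbar := Glb_Rbar (piX_lengths p q).

Definition piX_open_disk (r : R) (w : R * R) : Prop :=
  Rbar_lt (piX_dist (0, 0) w) (Finite r).

(* Main.v *)
Require Import Defs.
From Stdlib Require Import Reals Lra Psatz Classical.
From Coquelicot Require Import Coquelicot.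
Open Scope R_scope.

Lemma cp_mult f g x : continuity_pt f x -> continuity_pt g x -> continuity_pt (fun t => f t * g t) x.
Proof. intros; exact (continuity_pt_mult f g x H H0). Qed.
Lemma cp_plus f g x : continuity_pt f x -> continuity_pt g x -> continuity_pt (fun t => f t + g t) x.
Proof. intros; exact (continuity_pt_plus f g x H H0). Qed.
Lemma cp_const c x : continuity_pt (fun _ => c) x.
Proof. apply continuity_pt_const. intros a b; reflexivity. Qed.
Lemma cp_exp f x : continuity_pt f x -> continuity_pt (fun t => exp (f t)) x.
Proof. intros H. apply (continuity_pt_comp f exp x H). apply derivable_continuous_pt, derivable_pt_exp. Qed.
Lemma cp_sq f x : continuity_pt f x -> continuity_pt (fun t => f t ^ 2) x.
Proof. intros H. apply (continuity_pt_comp f (fun u => u ^ 2) x H).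
  apply derivable_continuous_pt. reg. Qed.
Lemma cp_sqrt f x : continuity_pt f x -> 0 <= f x -> continuity_pt (fun t => sqrt (f t)) x.
Proof. intros H H0. apply (continuity_pt_comp f sqrt x H). apply continuity_pt_sqrt; auto. Qed.

Lemma cont_of_cp f x : continuity_pt f x -> continuous f x.
Proof. intros H; apply continuity_pt_filterlim; auto. Qed.
Lemma cp_of_cont f x : continuous f x -> continuity_pt f x.
Proof. intros H; apply continuity_pt_filterlim; auto. Qed.

Ltac cpt := repeat first [apply cp_plus | apply cp_mult | apply cp_exp | apply cp_sq | apply cp_const | assumption].

Lemma le_sqrt v w : 0 <= w -> v ^ 2 <= w -> v <= sqrt w.
Proof.
  intros Hw H. destruct (Rle_or_lt v 0).
  - pose proof (sqrt_pos w); lra.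
  - rewrite <- (sqrt_pow2 v) by lra. apply sqrt_le_1_alt; auto.
Qed.

Lemma pointwise (a b c lam : R) : 0 <= a -> 0 <= b -> 0 < lam -> c ^ 2 <= a -> 
  sqrt b <= (1 + lam ^ 2 / 2) * sqrt (a + b) - lam * c.
Proof.
  intros Ha Hb Hl Hc.
  set (s := sqrt (a + b)). set (v := sqrt b).
  assert (Hs0 : 0 <= s) by apply sqrt_pos.
  assert (Hv0 : 0 <= v) by apply sqrt_pos.
  assert (Hs2 : s * s = a + b) by (apply sqrt_sqrt; lra).
  assert (Hv2 : v * v = b) by (apply sqrt_sqrt; lra).
  assert (Hcs : c <= s) by (apply le_sqrt; lra).
  destruct (Req_dec s 0) as [Hz|Hz].
  - assert (b = 0) by nra. assert (v = 0) by nra. rewrite Hz. nra.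
  - assert (Hsp : 0 < s) by lra.
    apply Rmult_le_reg_l with (2 * s); [lra|].
    assert (2 * s * (s - v) >= a) by nra.
    assert (a + lam^2 * (s*s) >= 2 * lam * c * s) by (pose proof (pow2_ge_0 (lam * s - c)); nra).
    nra.
Qed.
Section Curve.
Variables gx gy gz : R -> R.
Hypothesis Cx : C1_on01 gx.
Hypothesis Cy : C1_on01 gy.
Hypothesis Cz : C1_on01 gz.

Definition Sf t := sqrt (exp (-2 * gz t) * (Derive gx t) ^ 2
                       + exp (2 * gz t) * (Derive gy t) ^ 2
                       + (Derive gz t) ^ 2).
Definition Pf t := sqrt (exp (2 * gz t) * (Derive gy t) ^ 2 + (Derive gz t) ^ 2).

Lemma cont_S t : 0 <= t <= 1 -> continuous Sf t.
Proof.
  intros Ht. destruct (Cx t Ht) as [dx cx]. destruct (Cy t Ht) as [dy cy].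
  destruct (Cz t Ht) as [dz cz].
  apply cp_of_cont in cx, cy, cz.
  assert (cz0 := cp_of_cont _ _ (ex_derive_continuous _ _ dz)).
  apply cont_of_cp. unfold Sf. apply cp_sqrt.
  - cpt.
  - pose proof (exp_pos (-2 * gz t)); pose proof (exp_pos (2 * gz t));
    pose proof (pow2_ge_0 (Derive gx t)); pose proof (pow2_ge_0 (Derive gy t));
    pose proof (pow2_ge_0 (Derive gz t)); nra.
Qed.

Lemma cont_P t : 0 <= t <= 1 -> continuous Pf t.
Proof.
  intros Ht. destruct (Cy t Ht) as [dy cy].
  destruct (Cz t Ht) as [dz cz].
  apply cp_of_cont in cy, cz.
  assert (cz0 := cp_of_cont _ _ (ex_derive_continuous _ _ dz)).
  apply cont_of_cp. unfold Pf. apply cp_sqrt.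
  - cpt.
  - pose proof (exp_pos (2 * gz t));
    pose proof (pow2_ge_0 (Derive gy t));
    pose proof (pow2_ge_0 (Derive gz t)); nra.
Qed.

Lemma exS a b : 0 <= a -> a <= b -> b <= 1 -> ex_RInt Sf a b.
Proof. intros. apply (@ex_RInt_continuous R_CompleteNormedModule). intros u Hu.
  rewrite Rmin_left in Hu by lra. rewrite Rmax_right in Hu by lra.
  apply cont_S; lra. Qed.
Lemma exP : ex_RInt Pf 0 1.
Proof. apply (@ex_RInt_continuous R_CompleteNormedModule). intros u Hu.
  rewrite Rmin_left in Hu by lra. rewrite Rmax_right in Hu by lra.
  apply cont_P; lra. Qed.
Lemma exDx : ex_RInt (Derive gx) 0 1.
Proof. apply (@ex_RInt_continuous R_CompleteNormedModule). intros u Hu.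
  rewrite Rmin_left in Hu by lra. rewrite Rmax_right in Hu by lra.
  apply Cx; lra. Qed.

Lemma S_ge0 t : 0 <= Sf t.
Proof. apply sqrt_pos. Qed.

Lemma gz_bound t : 0 <= t <= 1 -> gz t - gz 0 <= RInt Sf 0 1.
Proof.
  intros Ht.
  rewrite <- RInt_Derive.
  2:{ intros u Hu. rewrite Rmin_left in Hu by lra. rewrite Rmax_right in Hu by lra. apply Cz; lra. }
  2:{ intros u Hu. rewrite Rmin_left in Hu by lra. rewrite Rmax_right in Hu by lra. apply Cz; lra. }
  apply Rle_trans with (RInt Sf 0 t).
  - apply RInt_le; try lra.
    + apply (@ex_RInt_continuous R_CompleteNormedModule). intros u Hu.
      rewrite Rmin_left in Hu by lra. rewrite Rmax_right in Hu by lra. apply Cz; lra.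
    + apply exS; lra.
    + intros u Hu. unfold Sf. apply le_sqrt.
      * pose proof (exp_pos (-2 * gz u)); pose proof (exp_pos (2 * gz u));
        pose proof (pow2_ge_0 (Derive gx u)); pose proof (pow2_ge_0 (Derive gy u));
        pose proof (pow2_ge_0 (Derive gz u)); nra.
      * pose proof (exp_pos (-2 * gz u)); pose proof (exp_pos (2 * gz u));
        pose proof (pow2_ge_0 (Derive gx u)); pose proof (pow2_ge_0 (Derive gy u)); nra.
  - rewrite <- (RInt_Chasles Sf 0 t 1) by (apply exS; lra).
    assert (0 <= RInt Sf t 1).
    { apply RInt_ge_0; try lra. apply exS; lra. intros; apply S_ge0. }
    change (plus ?a ?b) with (a + b). lra.
Qed.

Lemma gap K lam : 0 < lam -> gz 0 = 0 -> RInt Sf 0 1 <= K ->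
  RInt Pf 0 1 <= (1 + lam ^ 2 / 2) * RInt Sf 0 1 - lam * exp (- K) * (gx 1 - gx 0).
Proof.
  intros Hl Hz0 HK.
  assert (Hint : is_RInt (fun t => (1 + lam ^ 2 / 2) * Sf t - lam * exp (- K) * Derive gx t) 0 1
     ((1 + lam ^ 2 / 2) * RInt Sf 0 1 - lam * exp (- K) * (gx 1 - gx 0))).
  { apply (@is_RInt_minus R_NormedModule (fun t => (1 + lam ^ 2 / 2) * Sf t) (fun t => lam * exp (- K) * Derive gx t)).
    - apply (@is_RInt_scal R_NormedModule Sf). apply (@RInt_correct R_CompleteNormedModule). apply exS; lra.
    - apply (@is_RInt_scal R_NormedModule (Derive gx)).
      rewrite <- RInt_Derive.
      + apply (@RInt_correct R_CompleteNormedModule), exDx.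
      + intros u Hu. rewrite Rmin_left in Hu by lra. rewrite Rmax_right in Hu by lra. apply Cx; lra.
      + intros u Hu. rewrite Rmin_left in Hu by lra. rewrite Rmax_right in Hu by lra. apply Cx; lra. }
  rewrite <- (is_RInt_unique _ _ _ _ Hint).
  apply RInt_le; try lra.
  - apply exP.
  - eexists; exact Hint.
  - intros t Ht.
    assert (Hzt : gz t <= K) by (pose proof (gz_bound t); lra).
    unfold Pf, Sf.
    replace (lam * exp (- K) * Derive gx t) with (lam * (exp (- K) * Derive gx t)) by ring.
    rewrite (Rplus_assoc (exp (-2 * gz t) * Derive gx t ^ 2)).
    apply pointwise; auto.
    + pose proof (exp_pos (-2 * gz t)); pose proof (pow2_ge_0 (Derive gx t)); nra.
    + pose proof (exp_pos (2 * gz t)); pose proof (pow2_ge_0 (Derive gy t));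
      pose proof (pow2_ge_0 (Derive gz t)); nra.
    + assert (exp (-K) ^ 2 <= exp (-2 * gz t)).
      { replace (exp (-K) ^ 2) with (exp (-K + -K)) by (rewrite exp_plus; ring).
        destruct (Req_dec (-K + -K) (-2 * gz t)) as [E|E]; [rewrite E; lra|].
        left. apply exp_increasing. lra. }
      pose proof (pow2_ge_0 (Derive gx t)).
      replace ((exp (- K) * Derive gx t) ^ 2) with (exp (-K) ^ 2 * Derive gx t ^ 2) by ring.
      nra.
Qed.
End Curve.

Theorem lemma3p1 (r : R) (x y z : R) :
  0 < r -> sol_sphere r (x, y, z) -> 0 < x ->
  piX_open_disk r (etaX (x, y, z)).
Proof.
  intros Hr Hs Hx.
  unfold sol_sphere, sol_dist in Hs.
  set (K := r + 1). set (m := exp (- K) * x).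
  assert (Hm : 0 < m) by (unfold m; pose proof (exp_pos (-K)); nra).
  assert (HK : 0 < K) by (unfold K; lra).
  set (lam := m / K). set (d := m ^ 2 / (2 * K)).
  assert (Hd : 0 < d) by (unfold d; apply Rdiv_lt_0_compat; nra).
  set (eps := Rmin 1 d).
  assert (He : 0 < eps) by (unfold eps; apply Rmin_glb_lt; lra).
  destruct (classic (exists L, sol_lengths (0,0,0) (x,y,z) L /\ L < r + eps)) as [[L [HL HLr]]|Hno].
  2:{ exfalso.
      destruct (Glb_Rbar_correct (sol_lengths (0,0,0) (x,y,z))) as [_ Hg].
      assert (Hlb : is_lb_Rbar (sol_lengths (0,0,0) (x,y,z)) (Finite (r + eps))).
      { intros L HL. simpl. destruct (Rle_or_lt (r + eps) L); auto.
        exfalso; apply Hno; exists L; auto. }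
      specialize (Hg _ Hlb). rewrite Hs in Hg. simpl in Hg. lra. }
  destruct HL as [gx [gy [gz [Cx [Cy [Cz [H0 [H1 HLe]]]]]]]].
  injection H0 as Hx0 Hy0 Hz0. injection H1 as Hx1 Hy1 Hz1.
  assert (HLS : L = RInt (Sf gx gy gz) 0 1) by exact HLe.
  assert (HLK : RInt (Sf gx gy gz) 0 1 <= K).
  { rewrite <- HLS. unfold K. assert (eps <= 1) by apply Rmin_l. lra. }
  assert (Hlam : 0 < lam) by (unfold lam; apply Rdiv_lt_0_compat; lra).
  pose proof (gap gx gy gz Cx Cy Cz K lam Hlam Hz0 HLK) as G.
  rewrite <- HLS, Hx1, Hx0 in G.
  assert (Hd' : eps <= d) by apply Rmin_r.
  assert (HP : RInt (Pf gy gz) 0 1 < r).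
  { assert (L >= 0).
    { rewrite HLS. apply Rle_ge, RInt_ge_0; [lra| apply exS; auto; lra |].
      intros; apply S_ge0. }
    assert (E1 : lam * exp (- K) * (x - 0) = m * m / K) by (unfold lam, m; field; lra).
    assert (E2 : lam ^ 2 / 2 * L <= d).
    { replace (lam ^ 2 / 2 * L) with (d * (L / K)) by (unfold lam, d; field; lra).
      assert (L / K <= 1).
      { unfold Rdiv; apply Rmult_le_reg_r with K; [lra|].
        rewrite Rmult_assoc, Rinv_l, Rmult_1_r, Rmult_1_l; lra. }
      nra. }
    assert (E3 : m * m / K = 2 * d) by (unfold d; field; lra).
    nra. }
  unfold piX_open_disk, piX_dist. simpl.
  destruct (Glb_Rbar_correct (piX_lengths (0,0) (y,z))) as [Hlb _].
  apply Rbar_le_lt_trans with (Finite (RInt (Pf gy gz) 0 1)).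
  - apply Hlb. exists gy, gz. rewrite Hy0, Hz0, Hy1, Hz1.
    refine (conj Cy (conj Cz (conj eq_refl (conj eq_refl eq_refl)))).
  - simpl. exact HP.
Qed.
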